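(* Let $A\in\mathbb{R}^{n\times d}$ and let $k$ be a positive integer. Then $$\sum_{i=1}^{d}\bar\tau_i(A)\le 2k.$$
   Context: $A$ has columns $a_1,\dots,a_d$. $A_k$ denotes a best rank-$k$ approximation of $A$ in Frobenius norm (obtained from a truncated SVD), so $\|A-A_k\|_F^2=\sum_{j>k}\sigma_j(A)^2$. $M^+$ denotes the Moore–Penrose pseudoinverse. The ($k$-)ridge leverage score of the $i$-th column of $A$ is $$\bar\tau_i(A)=a_i^T\Big(AA^T+\tfrac{\|A-A_k\|_F^2}{k}I_n\Big)^+a_i .$$ *)

(* Defs.v *)
From HB Require Import structures.
From mathcomp Require Import all_boot all_order all_algebra.
Set Implicit Arguments. Unset Strict Implicit. Unset Printing Implicit Defensive.
Import Order.TTheory GRing.Theory Num.Theory.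
Local Open Scope ring_scope.

Definition frob2 (R : rcfType) (m n : nat) (M : 'M[R]_(m, n)) : R :=
  \sum_(i < m) \sum_(j < n) (M i j) ^+ 2.

Definition best_rank_approx (R : rcfType) (n d k : nat) (A Ak : 'M[R]_(n, d)) : Prop :=
  (\rank Ak <= k)%N /\
  forall B : 'M[R]_(n, d), (\rank B <= k)%N -> frob2 (A - Ak) <= frob2 (A - B).

Definition is_pinv (R : rcfType) (m n : nat) (M : 'M[R]_(m, n)) (P : 'M[R]_(n, m)) : Prop :=
  [/\ M *m P *m M = M, P *m M *m P = P,
      (M *m P)^T = M *m P & (P *m M)^T = P *m M].

Definition ridge_mx (R : rcfType) (n d k : nat) (A Ak : 'M[R]_(n, d)) : 'M[R]_n :=
  A *m A^T + (frob2 (A - Ak) / k%:R)%:M.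

Definition quad_col (R : rcfType) (n d : nat) (A : 'M[R]_(n, d)) (P : 'M[R]_n) (i : 'I_d) : R :=
  ((col i A)^T *m P *m col i A) ord0 ord0.

(* Main.v *)
Require Import Defs.
From HB Require Import structures.
From mathcomp Require Import all_boot all_order all_algebra.
From mathcomp Require Import ring lra.
Set Implicit Arguments. Unset Strict Implicit.
Import Order.TTheory GRing.Theory Num.Theory.
Local Open Scope ring_scope.

Section IP.
Variable R : rcfType.

Definition ip m n (X Y : 'M[R]_(m, n)) : R := \tr (X^T *m Y).

Lemma ip_sum m n (X Y : 'M[R]_(m, n)) :
  ip X Y = \sum_(i < n) \sum_(j < m) X j i * Y j i.
Proof. by rewrite /ip /mxtrace; apply: eq_bigr => i _; rewrite mxE; apply: eq_bigr => j _; rewrite mxE. Qed.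

Lemma ip_ge0 m n (X : 'M[R]_(m, n)) : 0 <= ip X X.
Proof.
rewrite ip_sum; apply: sumr_ge0 => i _; apply: sumr_ge0 => j _.
by rewrite -expr2 sqr_ge0.
Qed.

Lemma frob2_ip m n (X : 'M[R]_(m, n)) : frob2 X = ip X X.
Proof.
rewrite ip_sum /frob2 exchange_big; apply: eq_bigr => i _; apply: eq_bigr => j _.
by rewrite expr2.
Qed.

Lemma ipC m n (X Y : 'M[R]_(m, n)) : ip X Y = ip Y X.
Proof. by rewrite /ip -mxtrace_tr trmx_mul trmxK. Qed.

Lemma ipDr m n (X Y Z : 'M[R]_(m, n)) : ip X (Y + Z) = ip X Y + ip X Z.
Proof. by rewrite /ip mulmxDr mxtraceD. Qed.

Lemma ipNr m n (X Y : 'M[R]_(m, n)) : ip X (- Y) = - ip X Y.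
Proof. by rewrite /ip mulmxN linearN. Qed.

Lemma ipZr m n (X Y : 'M[R]_(m, n)) a : ip X (a *: Y) = a * ip X Y.
Proof. by rewrite /ip -scalemxAr mxtraceZ. Qed.

Lemma ipDl m n (X Y Z : 'M[R]_(m, n)) : ip (Y + Z) X = ip Y X + ip Z X.
Proof. by rewrite ipC ipDr !(ipC X). Qed.

Lemma ipNl m n (X Y : 'M[R]_(m, n)) : ip (- Y) X = - ip Y X.
Proof. by rewrite ipC ipNr ipC. Qed.

Lemma ipZl m n (X Y : 'M[R]_(m, n)) a : ip (a *: Y) X = a * ip Y X.
Proof. by rewrite ipC ipZr ipC. Qed.

Lemma ip_CS m n (X Y : 'M[R]_(m, n)) : (ip X Y)^+2 <= ip X X * ip Y Y.
Proof.
have H t : 0 <= ip X X - 2 * t * ip X Y + t^+2 * ip Y Y.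
  have E : ip (X - t *: Y) (X - t *: Y) = ip X X - 2 * t * ip X Y + t^+2 * ip Y Y.
    rewrite !(ipDr, ipDl, ipNr, ipNl, ipZr, ipZl) (ipC Y X); ring.
  by rewrite -E ip_ge0.
set a := ip X Y; set b := ip Y Y; set c := ip X X.
have b0 : 0 <= b := ip_ge0 Y.
have c0 : 0 <= c := ip_ge0 X.
have [bz|bp] := eqVneq b 0.
  have [az|anz] := eqVneq a 0; first by rewrite az bz expr0n /= mulr0.
  have := H ((c + 1) / (2 * a)).
  have -> : c - 2 * ((c + 1) / (2 * a)) * a + ((c + 1) / (2 * a)) ^+ 2 * b = -1.
    rewrite bz mulr0 addr0; field; rewrite anz /=; done.
  by rewrite oppr_ge0 ler10.
have bpos : 0 < b by rewrite lt_def bp b0.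
have := H (a / b).
have -> : c - 2 * (a / b) * a + (a / b) ^+ 2 * b = (c * b - a^+2) / b by field.
rewrite pmulr_lge0 ?invr_gt0 // subr_ge0 mulrC //.
Qed.

Lemma pinv_sym n (M P : 'M[R]_n) : M^T = M -> is_pinv M P -> P^T = P.
Proof.
move=> MT [c1 c2 c3 c4].
have e3 : P^T *m M = M *m P by rewrite -c3 trmx_mul MT.
have e4 : M *m P^T = P *m M by rewrite -c4 trmx_mul MT.
have h1 : P *m P *m M = P.
  have s1 : P = P *m P^T *m M by rewrite -mulmxA e3 mulmxA c2.
  have s2 : P *m P^T *m M = P *m P^T *m M *m P *m M by rewrite -(mulmxA _ M P) -(mulmxA _ (M *m P)) c1.
  have s3 : P *m P^T *m M *m P *m M = P *m M *m P *m P *m M.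
    by rewrite -(mulmxA P (P^T)) e3 !mulmxA.
  by rewrite [RHS]s1 s2 s3 c2.
have h2 : P *m M *m P^T = P by rewrite -mulmxA e4 mulmxA h1.
by rewrite -[in LHS]h2 !trmx_mul trmxK MT mulmxA h2.
Qed.

Lemma quad_sum n d (A : 'M[R]_(n, d)) (P : 'M[R]_n) :
  \sum_(i < d) quad_col A P i = ip A (P *m A).
Proof.
rewrite /ip mulmxA /mxtrace; apply: eq_bigr => i _.
rewrite /quad_col !mxE; apply: eq_bigr => j _; rewrite !mxE; congr (_ * _).
by apply: eq_bigr => l _; rewrite !mxE.
Qed.

Lemma msq (x : R) : 0 <= x * x.
Proof. by rewrite -expr2 sqr_ge0. Qed.

Lemma ip0 m n (X : 'M[R]_(m, n)) : ip X X = 0 -> X = 0.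
Proof.
rewrite ip_sum => h; apply/matrixP => j i; rewrite mxE.
have h1 := psumr_eq0P (fun i _ => sumr_ge0 _ (fun j _ => msq (X j i))) h (i:=i) isT.
have h2 := psumr_eq0P (fun j _ => msq (X j i)) h1 (i:=j) isT.
by move/eqP: h2; rewrite mulf_eq0 orbb => /eqP.
Qed.

Lemma mul_tr0 r s d (K : 'M[R]_(r, s)) (B : 'M[R]_(s, d)) :
  K *m (B *m B^T) = 0 -> K *m B = 0.
Proof.
move=> h; apply: trmx_inj; rewrite trmx0; apply: ip0.
rewrite /ip trmxK trmx_mul mulmxA -(mulmxA K) h mul0mx.
by rewrite linear0.
Qed.

Lemma exists_proj_gen r m d (C : 'M[R]_(m, d)) (B : 'M[R]_(r, d)) :
  row_free B -> (C <= B)%MS -> exists Pi : 'M[R]_d,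
  [/\ C *m Pi = C, Pi^T = Pi, Pi *m Pi = Pi & \tr Pi = r%:R].
Proof.
move=> Bfree CB.
set G := B *m B^T.
have GT : G^T = G by rewrite /G trmx_mul trmxK.
have Gu : G \in unitmx.
  rewrite -row_free_unit -kermx_eq0; apply/eqP.
  set K := kermx G.
  have KG : K *m G = 0 := mulmx_ker G.
  have KB : K *m B = 0 by apply: mul_tr0.
  apply: (row_free_inj Bfree) => /=.
  by rewrite KB mul0mx.
exists (B^T *m invmx G *m B); split.
- case/submxP: CB => D ->.
  by rewrite -!mulmxA (mulmxA B) -/G (mulmxA G) mulmxV // mul1mx.
- by rewrite !trmx_mul trmxK trmx_inv GT mulmxA.
- by rewrite -!mulmxA (mulmxA B) (mulmxA (B *m B^T)) -/G mulmxV // mul1mx.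
- by rewrite mxtrace_mulC mulmxA -/G mulmxV // mxtrace1.
Qed.

Lemma exists_proj m d (C : 'M[R]_(m, d)) : exists Pi : 'M[R]_d,
  [/\ C *m Pi = C, Pi^T = Pi, Pi *m Pi = Pi & \tr Pi = (\rank C)%:R].
Proof.
apply: (exists_proj_gen (row_base_free C)).
by rewrite eq_row_base.
Qed.

Lemma ip_mull m n p (X : 'M[R]_(m, p)) (B : 'M[R]_(m, n)) (Y : 'M[R]_(n, p)) :
  ip X (B *m Y) = ip (B^T *m X) Y.
Proof. by rewrite /ip trmx_mul trmxK mulmxA. Qed.

Lemma ip_mulr m n p (X : 'M[R]_(m, n)) (Y : 'M[R]_(m, p)) (W : 'M[R]_(p, n)) :
  ip X (Y *m W) = ip (X *m W^T) Y.
Proof. by rewrite /ip mulmxA mxtrace_mulC trmx_mul trmxK mulmxA. Qed.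

Lemma fin (a b u v K : R) : 0 < K -> 0 <= u -> 0 <= v ->
  a^+2 <= K * u -> b^+2 <= K * v -> a + b = u + v -> u + v <= 2 * K.
Proof.
move=> K0 u0 v0 ha hb e.
have h0 : (a + b)^+2 <= 2 * (a^+2 + b^+2) by have := sqr_ge0 (a - b); lra.
have h1 : (u + v)^+2 <= 2 * K * (u + v).
  rewrite -{1}e; lra.
have T0 : 0 <= u + v by lra.
case: (leP (u + v) (2 * K)) => // h.
exfalso.
have : 2 * K * (u + v) < (u + v) * (u + v) by rewrite ltr_pM2r; lra.
lra.
Qed.
End IP.

Unset Implicit Arguments.

Theorem mainTheorem1 (R : rcfType) (n d k : nat) (A Ak : 'M[R]_(n, d))
    (P : 'M[R]_n) :
  (0 < k)%N ->
  best_rank_approx k A Ak ->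
  is_pinv (ridge_mx k A Ak) P ->
  \sum_(i < d) quad_col A P i <= 2 * k%:R.
Proof.
move=> k0 [rk _] pinv.
set E := A - Ak.
set lam := frob2 E / k%:R.
have kR : 0 < k%:R :> R by rewrite ltr0n.
have lam0 : 0 <= lam by rewrite divr_ge0 ?frob2_ip ?ip_ge0 // ler0n.
have Elam : ip E E = k%:R * lam by rewrite /lam -frob2_ip mulrC divfK // gt_eqF.
set M := ridge_mx k A Ak.
have ME : M = A *m A^T + lam%:M by [].
have MT : M^T = M by rewrite ME linearD /= trmx_mul trmxK tr_scalar_mx.
have PT := pinv_sym MT pinv.
case: pinv => _ c2 _ _.
rewrite quad_sum.
have e1 : ip A (P *m A) = ip (P *m A) (M *m (P *m A)).
  by rewrite -{1}c2 -!mulmxA ip_mull PT.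
set Z := P *m A.
have hT : ip A Z = ip (A^T *m Z) (A^T *m Z) + lam * ip Z Z.
  by rewrite e1 ME mulmxDl mul_scalar_mx ipDr ipZr -mulmxA ip_mull.
have [Pi [h1 h2 h3 h4]] := exists_proj Ak.
have trPi : ip Pi Pi <= k%:R by rewrite /ip h2 h3 h4 ler_nat.
set Q := 1%:M - Pi.
have AQ : A *m Q = E *m Q.
  by rewrite /E mulmxBl [Ak *m Q]mulmxBr mulmx1 h1 subrr subr0.
have QT : Q^T = Q by rewrite /Q linearB /= trmx1 h2.
have QQ : Q *m Q = Q by rewrite /Q mulmxBr mulmx1 mulmxBl mul1mx h3 subrr subr0.
have hsplit : ip A Z = ip Pi (A^T *m Z) + ip (E *m Q) Z.
  have hA : A = A *m Pi + A *m Q by rewrite /Q mulmxBr mulmx1 addrC subrK.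
  rewrite {1}hA ipDl -AQ; congr (_ + _).
  by rewrite ipC ip_mull ipC.
have FF : ip (E *m Q) (E *m Q) <= ip E E.
  have e : ip (E *m Q) (E *m Q) = ip E E - ip (E *m Pi) (E *m Pi).
    rewrite ip_mulr QT -mulmxA QQ [ip (E *m Pi) (E *m Pi)]ip_mulr h2 -mulmxA h3.
    by rewrite /Q mulmxBr mulmx1 ipDl ipNl.
  by rewrite e; have := ip_ge0 (E *m Pi); lra.
rewrite hT; apply: (@fin _ (ip Pi (A^T *m Z)) (ip (E *m Q) Z)) => //.
- exact: ip_ge0.
- by rewrite mulr_ge0 // ip_ge0.
- apply: le_trans (ip_CS _ _) _.
  by apply: ler_wpM2r => //; exact: ip_ge0.
- apply: le_trans (ip_CS _ _) _.
  by rewrite mulrA -Elam; apply: ler_wpM2r => //; exact: ip_ge0.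
- by rewrite -hsplit hT.
Qed.
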